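(* Assume ${\bf v}$ has the RCI property and $\mathcal{X}_{\bf v}=[0,\infty)^d$. For $f\in C_0(\mathcal{C}_{\bf v})$ define $\tilde f:[0,\infty)^d\to\mathbb{C}$ by $\tilde f(x)=f(\mathcal{L}^\emptyset_{{\bf v},x})$. Then $\tilde f$ is continuous outside a set of Lebesgue measure zero (namely outside $\bigcup_{J\ne\emptyset}\mathtt X^J_{\bf v}$).
   Context: Let $D\ge d\ge1$ and ${\bf v}=\{v_1,\dots,v_d\}$ linearly independent unit vectors in $\mathbb{R}^D$. For $I\subset\{1,\dots,d\}$: ${\bf v}_I=\{v_i\}_{i\in I}$, ${\bf v}_I\setminus i:={\bf v}_{I\setminus\{i\}}$, $\mathcal{L}_{{\bf v}_I}:=\{n\in\mathbb{Z}^D: v_i\cdot n\ge0\ \forall i\in I\}$, $\mathcal{L}_{\bf v}:=\mathcal{L}_{{\bf v}_{\{1,\dots,d\}}}$, $A_{{\bf v}_I}z=(v_i\cdot z)_{i\in I}$, $\mathcal{X}_{{\bf v}_I}:=\overline{A_{{\bf v}_I}(\mathcal{L}_{{\bf v}_I})}$, $\mathcal{X}_{\bf v}$ for $I=\{1,\dots,d\}$. Subsets of $\mathbb{Z}^D$ carry the Fell topology (= product topology on $\{0,1\}^{\mathbb{Z}^D}$). $\Xi_{{\bf v}_I}:=\overline{\{\mathcal{L}_{{\bf v}_I}-n: n\in\mathcal{L}_{{\bf v}_I}\}}$, $\Xi_\emptyset=\{\mathbb{Z}^D\}$, $\Xi_{\bf v}:=\Xi_{{\bf v}_{\{1,\dots,d\}}}$.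 For nonempty $I$, ${\bf v}_I$ is rational (R) if $A_{{\bf v}_I}(\mathcal{L}_{{\bf v}_I})$ is a closed, discrete, finitely generated subsemigroup of $[0,\infty)^I$, completely irrational (CI) if $\mathcal{X}_{{\bf v}_I}=[0,\infty)^I$; RCI: every ${\bf v}_I$ with $\emptyset\ne I\subsetneq\{1,\dots,d\}$ is R or CI. $\mathcal{C}_{\bf v}:=\Xi_{\bf v}\setminus\bigcup_{i}\Xi_{{\bf v}\setminus i}$ (subspace topology). For $J\subset\{1,\dots,d\}$, $x\in\mathbb{R}^d$: $\mathcal{L}^J_{{\bf v},x}:=\{n\in\mathbb{Z}^D: v_k\cdot n+x_k>0\ (k\in J),\ v_k\cdot n+x_k\ge0\ (k\notin J)\}$; for $J\neq\emptyset$, $\mathtt X^J_{\bf v}:=\{x\in\mathcal{X}_{\bf v}:\forall k\in J\ \exists n\in\mathbb{Z}^D,\ x_k=v_k\cdot n\neq0\}$. *)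

(* Defs.v *)
From HB Require Import structures.
From mathcomp Require Import all_boot all_order all_algebra.
From mathcomp Require Import all_classical all_reals all_analysis.
From mathcomp Require Import complex.
Import numFieldTopology.Exports numFieldNormedType.Exports.
Import Order.TTheory GRing.Theory Num.Theory.

Set Implicit Arguments.
Unset Strict Implicit.
Unset Printing Implicit Defensive.

Local Open Scope ring_scope.
Local Open Scope classical_set_scope.

Definition Cplx (R : realType) := (R[i] : numFieldType).

(* Subsets of Z^D (Z^D = 'rV[int]_D), as indicator functions, with the
   Fell topology = product topology on {0,1}^(Z^D). *)
Definition FellSp (D : nat) := {ptws 'rV[int]_D -> bool}.

Section Defs.
Variables (R : realType) (d D : nat).
Implicit Types (v : 'I_d -> 'rV[R]_D) (I J : {set 'I_d}).

Definition dotZ (u : 'rV[R]_D) (n : 'rV[int]_D) : R :=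
  \sum_(j < D) u 0 j * (n 0 j)%:~R.

Definition Lcone v I : FellSp D :=
  fun n => [forall i, (i \in I) ==> (0 <= dotZ (v i) n)].

(* A_{v_I} n = (v_i . n)_{i in I}; R^I is encoded as the coordinate subspace
   of R^d of vectors vanishing outside I. *)
Definition Amap v I (n : 'rV[int]_D) : 'rV[R]_d :=
  \row_i (if i \in I then dotZ (v i) n else 0).

Definition orthant I : set 'rV[R]_d :=
  [set x : 'rV[R]_d | forall i, if i \in I then 0 <= x 0 i else x 0 i == 0].

Definition Aimg v I : set 'rV[R]_d := Amap v I @` [set n | Lcone v I n].

Definition Xset v I : set 'rV[R]_d := closure (Aimg v I).

Definition rational v I : Prop :=
  let S := Aimg v I in
  [/\ closed S,
      (forall y, S y -> \forall z \near y, S z -> z = y),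
      S `<=` orthant I,
      (forall a b, S a -> S b -> S (a + b)) &
      exists s : seq 'rV[R]_d, {subset s <= S} /\
        S = [set x | exists c : 'I_(size s) -> nat,
                       x = \sum_(k < size s) (c k)%:R *: s`_k]].

Definition completely_irrational v I : Prop := Xset v I = orthant I.

Definition RCI v : Prop :=
  forall I, I != finset.set0 -> I != finset.setT -> rational v I \/ completely_irrational v I.

Definition Xi v I : set (FellSp D) :=
  closure [set ((fun m => Lcone v I (m + n)) : FellSp D) | n in [set n | Lcone v I n]].

Definition Cv v : set (FellSp D) :=
  Xi v finset.setT `\` \bigcup_(i in [set: 'I_d]) Xi v (finset.setC (finset.set1 i)).

Definition LJ v J (x : 'rV[R]_d) : FellSp D :=
  fun n => [forall k, if k \in J then 0 < dotZ (v k) n + x 0 k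
                                 else 0 <= dotZ (v k) n + x 0 k].

Definition XJ v J : set 'rV[R]_d :=
  [set x | Xset v finset.setT x /\
           forall k, k \in J -> exists n, x 0 k = dotZ (v k) n /\ x 0 k != 0].

Definition bad_set v : set 'rV[R]_d :=
  [set x | exists J, J != finset.set0 /\ XJ v J x].

Definition C0on (A : set (FellSp D)) (f : FellSp D -> Cplx R) : Prop :=
  {within A, continuous f} /\
  forall e : R, 0 < e -> exists K : set (FellSp D),
    [/\ K `<=` A, compact K & forall S, A S -> ~ K S -> `|f S| < (e%:C)%C].

End Defs.

Definition lebesgue_null (R : realType) (d : nat) (A : set 'rV[R]_d) : Prop :=
  forall e : R, 0 < e -> exists a b : nat -> 'rV[R]_d,
    [/\ (forall n i, a n 0 i <= b n 0 i),
        A `<=` \bigcup_n [set x | forall i, a n 0 i <= x 0 i <= b n 0 i] &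
        forall N, \sum_(n < N) \prod_(i < d) (b n 0 i - a n 0 i) < e].

(* Main.v *)
Require Import Defs.
From HB Require Import structures.
From mathcomp Require Import all_boot all_order all_algebra.
From mathcomp Require Import all_classical all_reals all_analysis.
From mathcomp Require Import complex.
From mathcomp Require Import lra.
Import numFieldTopology.Exports numFieldNormedType.Exports.
Import Order.TTheory GRing.Theory Num.Theory.
Local Open Scope ring_scope.
Local Open Scope classical_set_scope.


Lemma ptws_cvg (D : nat) (F : set_system (FellSp D)) {FF : Filter F} (g : FellSp D) :
  (forall t, \forall h \near F, h t = g t) -> F --> g.
Proof.
move=> H; apply/cvg_sup => t; apply/cvg_image.
  by rewrite eqEsubset; split => // b _; exists (fun _ => b).
move=> P /= Pb; exists ((fun h : FellSp D => h t) @^-1` P).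
  apply: filterS (H t) => h /= E. rewrite /preimage /= E. exact: nbhs_singleton Pb.
by rewrite image_preimage // eqEsubset; split => // b _; exists (fun _ => b).
Qed.

Lemma ptws_ev {D : nat} (g : FellSp D) t : \forall h \near g, h t = g t.
Proof.
have := @proj_continuous _ (fun _ : 'rV[int]_D => bool) t g.
move=> /(_ [set b | b = g t]) H; apply: H.
by [].
Qed.

Lemma within_of {T : Type} (A : set T) (F : set_system T) {FF : Filter F} (P Q : set T) :
  F P -> (forall y, P y -> A y -> Q y) -> within A F Q.
Proof. by move=> FP PQ; rewrite /within; apply: filterS FP => y Py Ay; exact: PQ. Qed.

Section H.
Variables (R : realType) (d D : nat).
Implicit Types (v : 'I_d -> 'rV[R]_D).

Lemma dotZD (u : 'rV[R]_D) m n : dotZ u (m + n) = dotZ u m + dotZ u n.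
Proof. by rewrite /dotZ -big_split; apply: eq_bigr => j _; rewrite mxE intrD mulrDr. Qed.

Lemma dotZN (u : 'rV[R]_D) m : dotZ u (- m) = - dotZ u m.
Proof. by rewrite /dotZ -sumrN; apply: eq_bigr => j _; rewrite mxE intrN mulrN. Qed.

Lemma LJ0E v x m : LJ v finset.set0 x m = [forall k, 0 <= dotZ (v k) m + x 0 k].
Proof. by apply: eq_forallb => k; rewrite finset.in_set0. Qed.

Lemma LJ_cont {v x} : orthant finset.setT x -> ~ bad_set v x ->
  Xset v finset.setT = orthant finset.setT ->
  (LJ v finset.set0 : 'rV[R]_d -> FellSp D) @ within (orthant finset.setT) (nbhs x)
    --> (LJ v finset.set0 x : FellSp D).
Proof.
move=> Ox nb hX; apply: ptws_cvg => t.
have : within (orthant finset.setT) (nbhs x) (fun y : 'rV[R]_d => forall k,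
   (0 <= dotZ (v k) t + y 0 k) = (0 <= dotZ (v k) t + x 0 k)).
  have FW : Filter (within (orthant finset.setT) (nbhs x)) by exact: within_filter.
  apply: (@filter_forall 'rV[R]_d 'I_d (fun k (y : 'rV[R]_d) =>
   (0 <= dotZ (v k) t + y 0 k) = (0 <= dotZ (v k) t + x 0 k)) _ FW).
  move=> k.
  set c := dotZ (v k) t.
  have cv : (fun y : 'rV[R]_d => c + y 0 k) @ nbhs x --> c + x 0 k.
    apply: cvgD; first exact: cvg_cst.
    exact: (@coord_continuous R 1 d 0 k x).
  case: (ltrgtP 0 (c + x 0 k)) => h.
  - have H := (@cvgr_gt _ _ _ _ _ _ cv _ h).
    have {}H : nbhs x (fun t : 'rV[R]_d => 0 < c + t 0 k) by apply: H; exact: nbhs_filter.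
    apply: (@within_of _ _ _ (nbhs_filter x) _ _ H) => y yh _.
    by rewrite ltW.
  - have H := (@cvgr_lt _ _ _ _ _ _ cv _ h).
    have {}H : nbhs x (fun t : 'rV[R]_d => c + t 0 k < 0) by apply: H; exact: nbhs_filter.
    apply: (@within_of _ _ _ (nbhs_filter x) _ _ H) => y yh _.
    by rewrite leNgt yh.
  - have hx0 : x 0 k = 0.
      apply: contra_notP nb => xn; exists (finset.set1 k); split.
        by apply/finset.set0Pn; exists k; rewrite finset.in_set1.
      split; first by rewrite hX.
      move=> k'; rewrite finset.in_set1 => /eqP ->; exists (- t); split; last by apply/eqP.
      by rewrite dotZN -/c; apply/eqP; rewrite -subr_eq0 opprK addrC -h.
    move: h; rewrite hx0 addr0 => c0.
    apply: (@within_of _ _ _ (nbhs_filter x) setT) => [|y _ Oy]; first exact: filterT.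
    rewrite -c0 !add0r.
    by have := Oy k; rewrite finset.in_setT.
move=> W; apply: (@filterS _ _ (within_filter _ (nbhs_filter x)) _ _ _ W) => y E /=.
by rewrite !LJ0E; apply: eq_forallb => k; rewrite E.
Qed.

Lemma null_bad v : (1 <= d)%N -> Xset v finset.setT = orthant finset.setT ->
  lebesgue_null (bad_set v).
Proof.
move=> hd hX e e0.
pose k0 : 'I_d := Ordinal hd.
pose dec n : ('I_d * 'rV[int]_D * nat)%type := odflt (k0, 0, 0%N) (unpickle n).
pose c (y : ('I_d * 'rV[int]_D * nat)%type) := dotZ (v y.1.1) y.1.2.
exists (fun n => \row_i (if i == (dec n).1.1 then c (dec n) else 0)).
exists (fun n => \row_i (if i == (dec n).1.1 then c (dec n) else ((dec n).2)%:R)).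
split.
- by move=> n i; rewrite !mxE; case: ifP => // _; exact: ler0n.
- move=> x [J [J0 [Xx Hk]]].
  have [k kJ] := finset.set0Pn _ J0.
  have [n [xk _]] := Hk k kJ.
  have Ox : orthant finset.setT x by rewrite -hX.
  pose M := (Num.truncn (\sum_i x 0 i)).+1.
  exists (pickle (k, n, M)) => //.
  rewrite /dec pickleK /= => i; rewrite !mxE.
  case: eqP => [->|_]; first by rewrite /c /= -xk lexx.
  have Oi : 0 <= x 0 i by have := Ox i; rewrite finset.in_setT.
  rewrite Oi /=.
  apply: (le_trans _ (ltW (truncnS_gt _))).
  rewrite (bigD1 i) //= lerDl sumr_ge0 // => j _.
  by have := Ox j; rewrite finset.in_setT.
- move=> N; rewrite big1 // => n _.
  by rewrite (bigD1 (dec n).1.1) //= !mxE eqxx subrr mul0r.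
Qed.

Lemma part3 v (f : FellSp D -> Cplx R) x :
  {within Cv v, continuous f} ->
  (forall x, orthant finset.setT x -> Cv v (LJ v finset.set0 x)) ->
  orthant finset.setT x -> ~ bad_set v x ->
  Xset v finset.setT = orthant finset.setT ->
  (fun y => f (LJ v finset.set0 y)) @ within (orthant finset.setT) (nbhs x)
    --> f (LJ v finset.set0 x).
Proof.
move=> hf1 P1 Ox nb hX.
have fc := (subspace_continuousP (Cv v) f).1 hf1 _ (P1 x Ox).
have lc := LJ_cont Ox nb hX.
move=> P /fc /lc W.
have FW : Filter (within (orthant finset.setT) (nbhs x)) := within_filter _ (nbhs_filter x).
have W2 : within (orthant finset.setT) (nbhs x) (fun y : 'rV[R]_d => Cv v (LJ v finset.set0 y)).
  apply: (@within_of _ _ _ (nbhs_filter x) setT) => [|y _ Oy]; first exact: filterT.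
  exact: P1.
apply: (@filterS _ _ FW _ _ _ (filterI W W2)) => y [] /= H1 H2.
exact: H1.
Qed.

Lemma floor_approx (a w : 'I_D -> R) :
  `| \sum_j a j * (Num.floor (w j))%:~R - \sum_j a j * w j| <= \sum_j `|a j|.
Proof.
rewrite -sumrB; apply: le_trans (ler_norm_sum _ _ _) _.
apply: ler_sum => j _.
rewrite -mulrBr normrM; apply: ler_piMr => //.
have h1 := floor_le (w j); have h2 := floorD1_gt (w j).
rewrite ler0_norm ?subr_le0 // opprB lerBlDl; rewrite intrD in h2; exact: ltW.
Qed.

Lemma exists_p v (x : 'rV[R]_d) i : row_free (\matrix_(k < d) v k) ->
  exists p : 'rV[int]_D, (forall k, k != i -> 0 <= dotZ (v k) p) /\
     dotZ (v i) p + x 0 i < 0.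
Proof.
move=> /row_freeP [B MB].
pose C := \sum_(k < d) \sum_(j < D) `|v k 0 j|.
pose t : 'rV[R]_d := \row_k (if k == i then - (C + x 0 i + 1) else C).
pose wc := B *m t^T.
have Mw k : \sum_j v k 0 j * wc j 0 = t 0 k.
  have : (\matrix_(k < d) v k) *m wc = t^T by rewrite /wc mulmxA MB mul1mx.
  move/(congr1 (fun A : 'cV[R]_d => A k 0)); rewrite !mxE => <-.
  by apply: eq_bigr => j _; congr (_ * _); rewrite mxE.
pose p : 'rV[int]_D := \row_j Num.floor (wc j 0).
have ap k : `|dotZ (v k) p - t 0 k| <= C.
  rewrite -Mw /dotZ.
  have -> : \sum_(j < D) v k 0 j * (p 0 j)%:~R = \sum_j v k 0 j * (Num.floor (wc j 0))%:~R.
    by apply: eq_bigr => j _; congr (_ * _); rewrite mxE.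
  apply: le_trans (floor_approx (fun j => v k 0 j) (fun j => wc j 0)) _.
  rewrite /C (bigD1 k) //= lerDl sumr_ge0 // => l _; exact: sumr_ge0.
exists p; split.
- move=> k ki; have := ap k; rewrite ler_distl => /andP [+ _].
  by rewrite mxE (negbTE ki) subrr.
- have := ap i; rewrite ler_distl => /andP [_ +].
  rewrite mxE eqxx => h.
  rewrite -ltrBrDr sub0r; apply: le_lt_trans h _.
  lra.
Qed.

Lemma dotZ0 (u : 'rV[R]_D) : dotZ u 0 = 0.
Proof. by rewrite /dotZ big1 // => j _; rewrite mxE mulr0. Qed.

Lemma LJx0 v (x : 'rV[R]_d) : orthant finset.setT x -> LJ v finset.set0 x 0.
Proof.
move=> Ox; rewrite LJ0E; apply/forallP => k; rewrite dotZ0 add0r.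
by have := Ox k; rewrite finset.in_setT.
Qed.

Lemma notXi v (x : 'rV[R]_d) i : row_free (\matrix_(k < d) v k) ->
  orthant finset.setT x -> ~ Xi v (finset.setC (finset.set1 i)) (LJ v finset.set0 x).
Proof.
move=> hind Ox; have [p [hp hpi]] := exists_p v x i hind.
have NB : nbhs (LJ v finset.set0 x : FellSp D)
   [set S : FellSp D | S 0 = LJ v finset.set0 x 0 /\ S p = LJ v finset.set0 x p].
  have := filterI (ptws_ev (LJ v finset.set0 x) 0) (ptws_ev (LJ v finset.set0 x) p).
  by apply; exact: nbhs_filter.
move=> /(_ _ NB) [S [[n nL <-] [/= h0 hp']]].
have Lp : LJ v finset.set0 x p = false.
  apply/negbTE; rewrite LJ0E; apply/forallPn; exists i; by rewrite -ltNge.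
move: hp'; rewrite Lp => /negbT/negP; apply.
apply/forallP => k; apply/implyP => kI.
rewrite dotZD addr_ge0 //; last by move: nL => /forallP /(_ k) /implyP; apply.
apply: hp; move: kI; by rewrite finset.in_setC finset.in_set1.
Qed.

Lemma approx_pt v (x : 'rV[R]_d) (r : R) : 0 < r -> orthant finset.setT x ->
  Xset v finset.setT = orthant finset.setT ->
  exists n, Lcone v finset.setT n /\ forall k, x 0 k < dotZ (v k) n < x 0 k + r.
Proof.
move=> r0 Ox hX.
pose z : 'rV[R]_d := \row_k (x 0 k + r / 2).
have Oz : orthant finset.setT z.
  move=> k; rewrite finset.in_setT mxE addr_ge0 //; last by rewrite divr_ge0 // ltW.
  by have := Ox k; rewrite finset.in_setT.
have Cz : closure (Aimg v finset.setT) z by have : Xset v finset.setT z by rewrite hX.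
have NB : nbhs z (fun y : 'rV[R]_d => forall k, x 0 k < y 0 k < x 0 k + r).
  apply: (@filter_forall 'rV[R]_d 'I_d (fun k (y : 'rV[R]_d) => x 0 k < y 0 k < x 0 k + r) _ (nbhs_filter z)).
  move=> k.
  have cv := @coord_continuous R 1 d 0 k z.
  have h1 : x 0 k < z 0 k by rewrite mxE; lra.
  have h2 : z 0 k < x 0 k + r by rewrite mxE; lra.
  have H1 := (@cvgr_gt _ _ _ _ _ _ cv _ h1).
  have {}H1 : nbhs z (fun t : 'rV[R]_d => x 0 k < t 0 k) by apply: H1; exact: nbhs_filter.
  have H2 := (@cvgr_lt _ _ _ _ _ _ cv _ h2).
  have {}H2 : nbhs z (fun t : 'rV[R]_d => t 0 k < x 0 k + r) by apply: H2; exact: nbhs_filter.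
  apply: (@filterS _ _ (nbhs_filter z) _ _ _ (filterI H1 H2)) => y [a b].
  by rewrite a b.
have [y [[n nL <-] yB]] := Cz _ NB.
exists n; split => // k; have := yB k; by rewrite mxE finset.in_setT.
Qed.

Lemma inXi v (x : 'rV[R]_d) : orthant finset.setT x ->
  Xset v finset.setT = orthant finset.setT -> Xi v finset.setT (LJ v finset.set0 x).
Proof.
move=> Ox hX.
have seqex : forall j : nat, exists n, Lcone v finset.setT n /\
    forall k, x 0 k < dotZ (v k) n < x 0 k + j.+1%:R^-1.
  by move=> j; apply: approx_pt.
have [N HN] := choice seqex.
pose g : nat -> FellSp D := fun j m => Lcone v finset.setT (m + N j).
have gc : g @ \oo --> (LJ v finset.set0 x : FellSp D).
  apply: ptws_cvg => m.
  have E j : g j m = [forall k, 0 <= dotZ (v k) m + dotZ (v k) (N j)].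
    by rewrite /g /Lcone; apply: eq_forallb => k; rewrite finset.in_setT /= dotZD.
  have : \forall j \near \oo, forall k,
     (0 <= dotZ (v k) m + dotZ (v k) (N j)) = (0 <= dotZ (v k) m + x 0 k).
    apply: filter_forall => k; set c := dotZ (v k) m.
    case: (leP 0 (c + x 0 k)) => h.
    - apply: nearW => j; have /andP [H1 _] := (HN j).2 k.
      apply: (le_trans h); rewrite lerD2l; exact: ltW.
    - have hd : 0 < - (c + x 0 k) by rewrite oppr_gt0.
      apply: filterS (near_infty_natSinv_lt (PosNum hd)) => j /= hj.
      apply/negbTE; rewrite -ltNge; have /andP [_ H2] := (HN j).2 k.
      have hj' : (j.+1%:R^-1 : R) < - (c + x 0 k) := hj.
      clear hj; move: hj' H2; generalize (j.+1%:R^-1 : R) => u hj H2; clearbody c; lra.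
  move=> W; apply: (filterS _ W) => j Hj /=.
  rewrite E LJ0E; apply: eq_forallb => k; exact: Hj k.
move=> B NB; have H : \forall j \near \oo, B (g j) := gc B NB.
have [j Bj] := filter_ex H.
exists (g j); split => //; exists (N j) => //; exact: (HN j).1.
Qed.
End H.

Theorem mainTheorem13 (R : realType) (d D : nat) (v : 'I_d -> 'rV[R]_D)
  (hd : (1 <= d)%N) (hdD : (d <= D)%N)
  (hunit : forall i, \sum_(j < D) (v i 0 j) ^+ 2 = 1)
  (hindep : row_free (\matrix_(i < d) v i))
  (hRCI : RCI v)
  (hX : Xset v finset.setT = orthant finset.setT)
  (f : FellSp D -> Cplx R) (hf : C0on (Cv v) f) :
  let ftilde := fun x : 'rV[R]_d => f (LJ v finset.set0 x) in
  [/\ (forall x, orthant finset.setT x -> Cv v (LJ v finset.set0 x)),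
      lebesgue_null (bad_set v) &
      forall x, orthant finset.setT x -> ~ bad_set v x ->
        ftilde @ within (orthant finset.setT) (nbhs x) --> ftilde x].
Proof.
move=> ftilde.
have P1 : forall x, orthant finset.setT x -> Cv v (LJ v finset.set0 x).
  move=> x Ox; split; first exact: (@inXi R d D v x Ox hX).
  by move=> [i _ H]; exact: (@notXi R d D v x i hindep Ox H).
split => //.
- exact: (@null_bad R d D v hd hX).
- move=> x Ox nb; exact: (@part3 R d D v f x hf.1 P1 Ox nb hX).
Qed.
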